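(* Let $g:\mathbb{R}\to\mathbb{R}$ with $g(0)=0$ satisfy: (C1) $|g(x)|\le c+d|x|$ for all $x$, for some constants $c,d\ge0$; (C2) $g(x)<0$ for $x<0$ and $g(x)>0$ for $x>0$; (C3) $\inf_{\delta_1\le|x|\le\delta_2}|g(x)|>0$ for every $0<\delta_1<\delta_2<\infty$. Let $\{\mathcal{F}_n\}_{n\ge0}$ be a filtration, $X_0$ an integrable $\mathcal{F}_0$-measurable random variable, and $X_n=X_{n-1}-\alpha_nU_n$, $n\ge1$, where each $U_n$ is integrable and $\mathcal{F}_n$-measurable, and the constants $\alpha_n$ satisfy $\alpha_n\ge0$, $\alpha_n\to0$, $\sum_n\alpha_n=\infty$. Assume $E[U_n\mid\mathcal{F}_{n-1}]=g(X_{n-1})$ a.e. for $n\ge1$, and that the series $\sum_{i\ge1}\alpha_i\{U_i-E[U_i\mid\mathcal{F}_{i-1}]\}$ converges a.e. Then $X_n\to0$ a.e. *)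

(* Defs.v *)
From HB Require Import structures.
From mathcomp Require Import all_boot all_order all_algebra.
From mathcomp Require Import all_classical all_reals all_analysis.
Set Implicit Arguments. Unset Strict Implicit. Unset Printing Implicit Defensive.
Import Order.TTheory GRing.Theory Num.Theory.
Import numFieldNormedType.Exports.
Local Open Scope classical_set_scope.
Local Open Scope ring_scope.

Section defs.
Context {d : measure_display} {T : measurableType d} {R : realType}.

Definition sub_sigma_algebra (G : set (set T)) :=
  sigma_algebra setT G /\ G `<=` measurable.

Definition filtration (F : nat -> set (set T)) :=
  (forall n, sub_sigma_algebra (F n)) /\ (forall n m, (n <= m)%N -> F n `<=` F m).

Definition G_measurable (G : set (set T)) (f : T -> R) :=
  forall B : set R, measurable B -> G (f @^-1` B).

Definition cond_exp_version (P : probability T R) (G : set (set T))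
    (Y Z : T -> R) :=
  [/\ G_measurable G Z, P.-integrable setT (EFin \o Z) &
      forall A, G A -> (\int[P]_(x in A) (Y x)%:E = \int[P]_(x in A) (Z x)%:E)%E].
End defs.

(* Main.v *)
Require Import Defs.
From HB Require Import structures.
From mathcomp Require Import all_boot all_order all_algebra.
From mathcomp Require Import all_classical all_reals all_analysis.
From mathcomp Require Import lra.
Import Order.TTheory GRing.Theory Num.Theory.
Import numFieldNormedType.Exports.
Local Open Scope classical_set_scope.
Local Open Scope ring_scope.

Lemma step_pos (R : realType) (c dd eps w r a gx : R) : 0 < eps -> 0 <= c -> 0 <= dd ->
  0 <= a -> a * dd <= 1/2 -> a * (c + dd * eps) <= eps/4 -> `|r| <= eps/4 ->
  (0 < w + r -> 0 < gx) -> `|gx| <= c + dd * `|w + r| ->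
  eps/2 < w -> `|w - a * gx| = w - a * `|gx|.
Proof.
move=> e0 c0 d0 a0 ad ac hr hp hg hw.
    move: hr; rewrite ler_norml => /andP[hr1 hr2].
    have xp : 0 < w + r by lra.
    have gp := hp xp.
    rewrite (gtr0_norm gp) in hg *.
    rewrite (gtr0_norm xp) in hg.
    have h1 : a * gx <= a * c + a * dd * (w + r).
      rewrite -mulrA -mulrDr; exact: ler_wpM2l.
    have h2 : a * dd * (w + r) <= w / 2 + a * dd * (eps / 4).
      rewrite mulrDr; apply: lerD; last by rewrite ler_wpM2l // mulr_ge0.
      have : a * dd * w <= 1/2 * w by rewrite ler_wpM2r; lra.
      lra.
    have h3 : a * dd * (eps / 4) <= a * (dd * eps) by rewrite -mulrA ler_wpM2l //; nra.
    rewrite ger0_norm //.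
    nra.
Qed.

Lemma step_lem (R : realType) (c dd eps w r a gx : R) : 0 < eps -> 0 <= c -> 0 <= dd ->
  0 <= a -> a * dd <= 1/2 -> a * (c + dd * eps) <= eps/4 -> `|r| <= eps/4 ->
  (0 < w + r -> 0 < gx) -> (w + r < 0 -> gx < 0) -> `|gx| <= c + dd * `|w + r| ->
  (eps/2 < `|w| -> `|w - a * gx| = `|w| - a * `|gx|) /\
  (`|w| <= eps/2 -> `|w - a * gx| <= eps).
Proof.
move=> e0 c0 d0 a0 ad ac hr hp hn hg.
split.
- move=> hw.
  have [wpos|wneg] := lerP 0 w.
  + rewrite (ger0_norm wpos) in hw *.
    exact: (@step_pos R c dd eps _ _ _ _ e0 c0 d0 a0 ad ac hr hp hg hw).
  + rewrite (ltr0_norm wneg) in hw *.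
    have hr' : `|- r| <= eps/4 by rewrite normrN.
    have hp' : 0 < - w + - r -> 0 < - gx.
      by move=> h; rewrite oppr_gt0; apply: hn; lra.
    have hg' : `|- gx| <= c + dd * `|- w + - r|.
      by rewrite normrN -opprD normrN.
    have := @step_pos R c dd eps _ _ _ _ e0 c0 d0 a0 ad ac hr' hp' hg' hw.
    have -> : - w - a * - gx = - (w - a * gx) by rewrite mulrN opprK opprB addrC.
    by rewrite !normrN.
- move=> hw.
  have hx : `|w + r| <= eps/2 + eps/4 by apply: (le_trans (ler_normD _ _)); lra.
  have h1 : a * `|gx| <= a * c + a * dd * (eps/2 + eps/4).
    rewrite -mulrA -mulrDr; apply: ler_wpM2l => //.
    apply: (le_trans hg); apply: lerD => //; exact: ler_wpM2l.
  have h3 : a * dd * (eps/2 + eps/4) <= a * (dd * eps) by rewrite -mulrA ler_wpM2l //; nra.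
  apply: (le_trans (ler_normB _ _)); rewrite normrM (ger0_norm a0).
  lra.
Qed.

Lemma det_lem (R : realType) (g : R -> R) (c dd : R) (x e a : nat -> R) :
 0 <= c -> 0 <= dd -> (forall y, `|g y| <= c + dd * `|y|) ->
 (forall y, y < 0 -> g y < 0) -> (forall y, 0 < y -> 0 < g y) ->
 (forall d1 d2 : R, 0 < d1 -> d1 < d2 ->
     exists m : R, 0 < m /\ forall y, d1 <= `|y| <= d2 -> m <= `|g y|) ->
 (forall n, x n.+1 = x n - a n.+1 * g (x n) - a n.+1 * e n.+1) ->
 (forall n, 0 <= a n.+1) -> a @ \oo --> 0 ->
 (fun n => \sum_(1 <= i < n.+1) a i) @ \oo --> +oo ->
 cvg ((fun n => \sum_(1 <= i < n.+1) a i * e i) @ \oo) ->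
 x @ \oo --> 0.
Proof.
move=> c0 d0 hg hn hp hC3 hrec a0 ha hT hS.
set S := fun n => \sum_(1 <= i < n.+1) a i * e i.
set L := lim (S @ \oo).
pose r n := L - S n.
have r0 : r @ \oo --> 0.
  rewrite -(subrr L); apply: cvgB => //; exact: cvg_cst.
pose w n := x n - r n.
have wrec n : w n.+1 = w n - a n.+1 * g (x n).
  rewrite /w /r /S big_nat_recr //= hrec; lra.
have xw n : x n = w n + r n by rewrite /w subrK.
suff w0 : w @ \oo --> 0.
  have -> : x = (fun n => w n + r n) by apply: funext => n; exact: xw.
  rewrite -[0](addr0 0); exact: cvgD.
apply/cvgr0Pnorm_le => eps e0.
pose K0 := 1 + c + dd * (1 + eps).
have K0p : 0 < K0 by rewrite /K0; nra.
pose e1 := Num.min (1/2) (eps/4).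
have e1p : 0 < e1 by rewrite /e1 lt_min; apply/andP; split; lra.
pose eta := e1 / K0.
have etap : 0 < eta by rewrite divr_gt0.
move/cvgr0Pnorm_le : ha => /(_ eta etap) [Na _ HNa].
move/cvgr0Pnorm_le : r0 => /(_ (eps/4)) [|Nr _ HNr]; first lra.
pose N := maxn Na Nr.
have smallz n z : (N <= n)%N -> 0 <= z <= K0 -> a n.+1 * z <= e1.
  move=> Nn /andP[z0 zK].
  have an : a n.+1 <= eta.
    have := HNa n.+1; rewrite /= ger0_norm //; apply.
    by apply: leq_trans (leqnSn _); apply: leq_trans Nn; exact: leq_maxl.
  apply: (le_trans (ler_pM (a0 n) z0 an zK)).
  by rewrite /eta divfK // gt_eqF.
have cond n : (N <= n)%N -> [/\ `|r n| <= eps/4,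
     a n.+1 * dd <= 1/2 & a n.+1 * (c + dd * eps) <= eps/4].
  move=> Nn; split.
  - have := HNr n; apply.
    by apply: leq_trans Nn; exact: leq_maxr.
  - apply: (le_trans (smallz n dd Nn _)); last by rewrite ge_min lexx.
    by rewrite d0 /K0; nra.
  - apply: (le_trans (smallz n (c + dd * eps) Nn _)); last by rewrite ge_min lexx orbT.
    by rewrite /K0; apply/andP; split; nra.
have stepn n : (N <= n)%N ->
   (eps/2 < `|w n| -> `|w n.+1| = `|w n| - a n.+1 * `|g (x n)|) /\
   (`|w n| <= eps/2 -> `|w n.+1| <= eps).
  move=> Nn; have [h1 h2 h3] := cond n Nn.
  rewrite wrec xw; apply: (@step_lem R c dd eps _ (r n)) => //; [exact: hp|exact: hn].
have maxstep n : (N <= n)%N -> `|w n.+1| <= Num.max `|w n| eps.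
  move=> Nn; have [h1 h2] := stepn n Nn.
  have [hw|hw] := lerP `|w n| (eps/2).
  - by rewrite le_max (h2 hw) orbT.
  - rewrite le_max (h1 hw); apply/orP; left.
    have := a0 n; have := normr_ge0 (g (x n)); move=> *; nra.
have inv M k : (N <= M)%N -> `|w (M + k)%N| <= Num.max `|w M| eps.
  move=> NM; elim: k => [|k IH]; first by rewrite addn0 le_max lexx.
  rewrite addnS; apply: (le_trans (maxstep _ _)).
    by apply: leq_trans NM (leq_addr _ _).
  by rewrite ge_max IH le_max lexx orbT.
have reach : exists2 M, (N <= M)%N & `|w M| <= eps/2.
  apply: contrapT => H.
  have Hall M : (N <= M)%N -> eps/2 < `|w M|.
    move=> NM; rewrite ltNge; apply/negP => h; apply: H; by exists M.
  pose K := Num.max `|w N| eps.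
  have Ke : eps <= K by rewrite le_max lexx orbT.
  have d1p : 0 < eps/4 by lra.
  have d12 : eps/4 < K + eps/2 by lra.
  have [m [m0 Hm]] := hC3 (eps/4) (K + eps/2) d1p d12.
  have gb n : (N <= n)%N -> m <= `|g (x n)|.
    move=> Nn; apply: Hm; rewrite xw.
    have [h1 _ _] := cond n Nn.
    have wK : `|w n| <= K by have := inv N (n - N)%N (leqnn _); rewrite subnKC.
    have := Hall n Nn.
    have := lerB_normD (w n) (r n).
    have := ler_normD (w n) (r n).
    move=> *; apply/andP; split; lra.
  pose T n := \sum_(1 <= i < n.+1) a i.
  have dec k : `|w (N + k)%N| <= `|w N| - m * (T (N + k)%N - T N).
    elim: k => [|k IH]; first by rewrite addn0 subrr mulr0 subr0.
    have NNk : (N <= N + k)%N by exact: leq_addr.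
    have [h1 _] := stepn _ NNk.
    rewrite addnS (h1 (Hall _ NNk)) /T big_nat_recr //=.
    have := gb _ NNk.
    have : a (N + k).+1 * m <= a (N + k).+1 * `|g (x (N + k)%N)|.
      have := a0 (N + k); have := gb _ NNk; move=> *; nra.
    rewrite -/(T (N + k)%N).
    rewrite -/(T N); move: IH; rewrite !(mulrBr, mulrDr); move=> *; lra.
  move/cvgryPge : hT => /(_ (T N + `|w N| / m + 1)) [NT _ HNT].
  have := HNT (maxn N NT) (leq_maxr _ _); rewrite /= -/(T _) => hTn.
  have := dec (maxn N NT - N)%N; rewrite subnKC ?leq_maxl // => hd.
  have : m * (`|w N| / m) = `|w N| by rewrite mulrC divfK // gt_eqF.
  have := normr_ge0 (w (maxn N NT)).
  move=> *; nra.
case: reach => M NM hM.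
exists M => // n /= Mn.
have := inv M (n - M)%N NM; rewrite subnKC //.
by rewrite max_r //; lra.
Qed.

Theorem mainTheorem5 (R : realType) (g : R -> R) (d : measure_display)
  (T : measurableType d) (P : probability T R) (F : nat -> set (set T))
  (X U V : nat -> T -> R) (alpha : nat -> R) :
  g 0 = 0 ->
  (exists c dd : R, [/\ 0 <= c, 0 <= dd & forall x, `|g x| <= c + dd * `|x|]) ->
  (forall x, x < 0 -> g x < 0) -> (forall x, 0 < x -> 0 < g x) ->
  (forall d1 d2 : R, 0 < d1 -> d1 < d2 ->
     exists m : R, 0 < m /\ forall x, d1 <= `|x| <= d2 -> m <= `|g x|) ->
  filtration F ->
  P.-integrable setT (EFin \o X 0%N) -> G_measurable (F 0%N) (X 0%N) ->
  (forall n, (0 < n)%N -> forall x, X n x = X n.-1 x - alpha n * U n x) ->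
  (forall n, (0 < n)%N ->
     P.-integrable setT (EFin \o U n) /\ G_measurable (F n) (U n)) ->
  (forall n, (0 < n)%N -> 0 <= alpha n) ->
  alpha @ \oo --> 0 ->
  (fun n => \sum_(1 <= i < n.+1) alpha i) @ \oo --> +oo ->
  (* V n is (a version of) E[U_n | F_{n-1}], n >= 1 *)
  (forall n, (0 < n)%N -> cond_exp_version P (F n.-1) (U n) (V n)) ->
  (forall n, (0 < n)%N -> {ae P, forall x, V n x = g (X n.-1 x)}) ->
  {ae P, forall x, cvg ((fun n => \sum_(1 <= i < n.+1)
                           alpha i * (U i x - V i x)) @ \oo)} ->
  {ae P, forall x, (fun n => X n x) @ \oo --> 0}.
Proof.
move=> g0 [c [dd [c0 d0 hg]]] hn hp hC3 hF hX0i hX0m hrec hU ha0 ha hT hV hVg hS.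
have hall : {ae P, forall x, forall n, V n.+1 x = g (X n x)}.
  exact: ae_foralln (fun n => hVg n.+1 erefl).
apply: filterS2 hall hS => x hVx hSx.
apply: (@det_lem R g c dd (fun n => X n x) (fun i => U i x - V i x) alpha) => //.
- move=> n /=; rewrite (hrec n.+1 erefl x) /= -(hVx n); lra.
- by move=> n; apply: ha0.
Qed.
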